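(* Let $\mathcal P$ be a compact parameter set with probability distribution $\mathbb P$, and for each $P\in\mathcal P$ let the quadratic program $J^*(P)=\min_U\{p(P;U): H(P)U\le h(P)\}$ be feasible with finite optimal value, with $p(P;U):=\tfrac12 U^\top Q(P)U+c(P)^\top U$ and dual function $d(P;\lambda)$. Let $\tilde U$ and $\tilde\lambda$ be fixed maps on $\mathcal P$ (independent of the verification samples). Given $\epsilon\in(0,1)$, $\beta\in(0,1)$, $\gamma>0$, choose $\epsilon_p,\epsilon_d>0$ with $\epsilon_p+\epsilon_d=\epsilon$, $\beta_p,\beta_d>0$ with $\beta_p+\beta_d=\beta$, $\gamma_p,\gamma_d>0$ with $\gamma_p+\gamma_d=\gamma$, and integers $N_p\ge \ln(1/\beta_p)/\ln(1/(1-\epsilon_p))$, $N_d\ge \ln(1/\beta_d)/\ln(1/(1-\epsilon_d))$. Draw independent samples $P^{(1)},\dots,P^{(N_p)}$ (primal) and $\bar P^{(1)},\dots,\bar P^{(N_d)}$ (dual), all i.i.d. according to $\mathbb P$. Then, with probability at least $1-\beta$ over these samples, the following holds: if $$H(P^{(i)})\tilde U(P^{(i)})\le h(P^{(i)}),\quad p(P^{(i)};\tilde U(P^{(i)}))\le J^*(P^{(i)})+\gamma_p\quad (i=1,\dots,N_p)$$ and $$\tilde\lambda(\bar P^{(j)})\ge0,\quad d(\bar P^{(j)};\tilde\lambda(\bar P^{(j)}))\ge J^*(\bar P^{(j)})-\gamma_d\quad (j=1,\dots,N_d),$$ then $$\mathbb P\big[\,H(P)\tilde U(P)\le h(P),\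 \tilde\lambda(P)\ge0,\ p(P;\tilde U(P))-d(P;\tilde\lambda(P))\le\gamma\,\big]\ \ge\ 1-\epsilon.$$
   Context: $Q(P)$ is symmetric positive definite, $c(P)$ a vector, $H(P),h(P)$ a matrix and vector of compatible dimensions; inequalities are componentwise. The dual function is $d(P;\lambda):=\inf_U\{p(P;U)+\lambda^\top(H(P)U-h(P))\}=-\tfrac12 (c(P)+H(P)^\top\lambda)^\top Q(P)^{-1}(c(P)+H(P)^\top\lambda)-\lambda^\top h(P)$ for $\lambda\ge0$. In the paper $\tilde U$ is a learned approximation of the MPC optimizer (primal policy) and $\tilde\lambda$ a learned approximation of the optimal dual multiplier (dual policy). *)

(* Defs.v *)
From Stdlib Require Import Reals ClassicalEpsilon.
Open Scope R_scope.

Fixpoint rsum (n : nat) (f : nat -> R) : R :=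
  match n with O => 0 | S k => rsum k f + f k end.
Fixpoint rprod (n : nat) (f : nat -> R) : R :=
  match n with O => 1 | S k => rprod k f * f k end.

(** Vectors in R^n are functions nat -> R (only indices < n matter);
    matrices are functions nat -> nat -> R. *)
Definition vec := nat -> R.
Definition mat := nat -> nat -> R.

Definition dot (n : nat) (u v : vec) : R := rsum n (fun i => u i * v i).
Definition mv (n : nat) (A : mat) (u : vec) : vec :=
  fun i => rsum n (fun j => A i j * u j).

Definition sym_pd (n : nat) (Q : mat) : Prop :=
  (forall i j, (i < n)%nat -> (j < n)%nat -> Q i j = Q j i) /\
  (forall x : vec, (exists i, (i < n)%nat /\ x i <> 0) -> 0 < dot n x (mv n Q x)).

Definition qp_obj (n : nat) (Q : mat) (c U : vec) : R :=
  / 2 * dot n U (mv n Q U) + dot n c U.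

Definition qp_feas (n m : nat) (H : mat) (h U : vec) : Prop :=
  forall i, (i < m)%nat -> mv n H U i <= h i.

Definition vnonneg (m : nat) (lam : vec) : Prop :=
  forall i, (i < m)%nat -> 0 <= lam i.

Definition is_glb_R (S : R -> Prop) (l : R) : Prop :=
  (forall x, S x -> l <= x) /\ (forall b, (forall x, S x -> b <= x) -> b <= l).

Definition Rinf (S : R -> Prop) : R :=
  match excluded_middle_informative (exists l, is_glb_R S l) with
  | left H => proj1_sig (constructive_indefinite_description _ H)
  | right _ => 0
  end.

Definition qp_feasible_finite (n m : nat) (Q : mat) (c : vec) (H : mat) (h : vec) : Prop :=
  (exists U, qp_feas n m H h U) /\
  (exists l, forall U, qp_feas n m H h U -> l <= qp_obj n Q c U).

Definition qp_value (n m : nat) (Q : mat) (c : vec) (H : mat) (h : vec) : R :=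
  Rinf (fun v => exists U, qp_feas n m H h U /\ v = qp_obj n Q c U).

Definition lagrangian (n m : nat) (Q : mat) (c : vec) (H : mat) (h U lam : vec) : R :=
  qp_obj n Q c U + dot m lam (fun i => mv n H U i - h i).
Definition qp_dual (n m : nat) (Q : mat) (c : vec) (H : mat) (h lam : vec) : R :=
  Rinf (fun v => exists U, v = lagrangian n m Q c H h U lam).

Definition primal_ok (n m : nat) (Q : vec -> mat) (c : vec -> vec) (H : vec -> mat)
  (h : vec -> vec) (Ut : vec -> vec) (gp : R) (P : vec) : Prop :=
  qp_feas n m (H P) (h P) (Ut P) /\
  qp_obj n (Q P) (c P) (Ut P) <= qp_value n m (Q P) (c P) (H P) (h P) + gp.

Definition dual_ok (n m : nat) (Q : vec -> mat) (c : vec -> vec) (H : vec -> mat)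
  (h : vec -> vec) (lt : vec -> vec) (gd : R) (P : vec) : Prop :=
  vnonneg m (lt P) /\
  qp_value n m (Q P) (c P) (H P) (h P) - gd <= qp_dual n m (Q P) (c P) (H P) (h P) (lt P).

Definition target_ok (n m : nat) (Q : vec -> mat) (c : vec -> vec) (H : vec -> mat)
  (h : vec -> vec) (Ut lt : vec -> vec) (g : R) (P : vec) : Prop :=
  qp_feas n m (H P) (h P) (Ut P) /\ vnonneg m (lt P) /\
  qp_obj n (Q P) (c P) (Ut P) - qp_dual n m (Q P) (c P) (H P) (h P) (lt P) <= g.

(** Sequential compactness of a subset of R^q (points are zero beyond q) *)
Definition compact_Rq (q : nat) (K : vec -> Prop) : Prop :=
  (forall P, K P -> forall i, (q <= i)%nat -> P i = 0) /\
  (forall u : nat -> vec, (forall k, K (u k)) ->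
     exists phi : nat -> nat, (forall k, (phi k < phi (S k))%nat) /\
       exists L, K L /\ forall i, Un_cv (fun k => u (phi k) i) (L i)).

Definition sigma_algebra {T : Type} (F : (T -> Prop) -> Prop) : Prop :=
  F (fun _ => True) /\
  (forall A, F A -> F (fun x => ~ A x)) /\
  (forall A : nat -> T -> Prop, (forall k, F (A k)) -> F (fun x => exists k, A k x)).

Definition prob_measure {T : Type} (F : (T -> Prop) -> Prop) (mu : (T -> Prop) -> R) : Prop :=
  mu (fun _ => True) = 1 /\
  (forall A, F A -> 0 <= mu A) /\
  (forall A : nat -> T -> Prop, (forall k, F (A k)) ->
     (forall k l x, k <> l -> A k x -> A l x -> False) ->
     infinite_sum (fun k => mu (A k)) (mu (fun x => exists k, A k x))).

Definition measurable_map {O T : Type} (FO : (O -> Prop) -> Prop) (FT : (T -> Prop) -> Prop)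
  (X : O -> T) : Prop :=
  forall A, FT A -> FO (fun w => A (X w)).

Definition iid_sample {O T : Type} (FO : (O -> Prop) -> Prop) (Pr : (O -> Prop) -> R)
  (FT : (T -> Prop) -> Prop) (mu : (T -> Prop) -> R) (X : nat -> O -> T) (N : nat) : Prop :=
  (forall k, (k < N)%nat ->
     measurable_map FO FT (X k) /\ (forall A, FT A -> Pr (fun w => A (X k w)) = mu A)) /\
  (forall A : nat -> T -> Prop, (forall k, (k < N)%nat -> FT (A k)) ->
     Pr (fun w => forall k, (k < N)%nat -> A k (X k w)) =
     rprod N (fun k => Pr (fun w => A k (X k w)))).

(* Main.v *)
Require Import Defs.
From Stdlib Require Import Reals Lra Lia Classical FunctionalExtensionality PropExtensionality.
Open Scope R_scope.

Lemma set_ext {T : Type} (A B : T -> Prop) : (forall x, A x <-> B x) -> A = B.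
Proof. intros H; apply functional_extensionality; intros x; apply propositional_extensionality; auto. Qed.

Section M.
Context {T : Type} (F : (T -> Prop) -> Prop) (mu : (T -> Prop) -> R)
  (HF : sigma_algebra F) (Hm : prob_measure F mu).

Lemma sa_T : F (fun _ => True). Proof. apply HF. Qed.
Lemma sa_C A : F A -> F (fun x => ~ A x). Proof. apply HF. Qed.
Lemma sa_0 : F (fun _ => False).
Proof. replace (fun _ : T => False) with (fun x : T => ~ True) by (apply set_ext; tauto). apply sa_C, sa_T. Qed.

Definition seq2 (A B : T -> Prop) (k : nat) : T -> Prop :=
  match k with 0%nat => A | 1%nat => B | _ => fun _ => False end.

Lemma sa_U A B : F A -> F B -> F (fun x => A x \/ B x).
Proof.
  intros HA HB.
  replace (fun x => A x \/ B x) with (fun x => exists k, seq2 A B k x).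
  - apply HF. intros [|[|k]]; simpl; auto using sa_0.
  - apply set_ext; intros x; split.
    + intros [[|[|k]] H]; simpl in H; tauto.
    + intros [H|H]; [exists 0%nat|exists 1%nat]; exact H.
Qed.

Lemma sa_I A B : F A -> F B -> F (fun x => A x /\ B x).
Proof.
  intros HA HB.
  replace (fun x => A x /\ B x) with (fun x => ~ ((~ A x) \/ (~ B x))).
  - apply sa_C, sa_U; apply sa_C; auto.
  - apply set_ext; intros x; tauto.
Qed.

Lemma mu_0 : mu (fun _ => False) = 0.
Proof.
  destruct Hm as [_ [_ Hs]].
  assert (H := Hs (fun _ => fun _ => False) (fun _ => sa_0) (fun _ _ _ _ h _ => h)).
  set (c := mu (fun _ => False)) in *.
  set (l := mu _) in H.
  destruct (Req_dec c 0) as [e|ne]; auto.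
  destruct (H (Rabs c / 2)) as [N HN]. { assert (0 < Rabs c) by (apply Rabs_pos_lt; auto). lra. }
  assert (h1 := HN N (le_n _)). assert (h2 := HN (S N) (le_S _ _ (le_n _))).
  unfold Rdist in *. simpl in h2. set (S0 := sum_f_R0 _ N) in *.
  assert (Rabs c <= Rabs (S0 + c - l) + Rabs (S0 - l)).
  { replace c with ((S0 + c - l) + - (S0 - l)) at 1 by ring.
    eapply Rle_trans; [apply Rabs_triang|]. rewrite Rabs_Ropp. lra. }
  exfalso. fold c in h2. lra.
Qed.

Lemma mu_add A B : F A -> F B -> (forall x, A x -> B x -> False) ->
  mu (fun x => A x \/ B x) = mu A + mu B.
Proof.
  intros HA HB Hd.
  destruct Hm as [_ [_ Hs]].
  assert (H := Hs (seq2 A B)).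
  replace (fun x => exists k, seq2 A B k x) with (fun x => A x \/ B x) in H.
  2:{ apply set_ext; intros x; split.
    + intros [H1|H1]; [exists 0%nat|exists 1%nat]; exact H1.
    + intros [[|[|k]] H1]; simpl in H1; tauto. }
  symmetry; apply (uniqueness_sum (fun k => mu (seq2 A B k))).
  - intros e He. exists 1%nat. intros n Hn.
    assert (E : sum_f_R0 (fun k => mu (seq2 A B k)) n = mu A + mu B).
    { induction n as [|n IH]; [lia|].
      destruct n as [|n]; [simpl; ring|].
      simpl sum_f_R0 in *. rewrite <- IH by lia. simpl. rewrite mu_0. ring. }
    rewrite E. unfold Rdist. replace (mu A + mu B - (mu A + mu B)) with 0 by ring.
    rewrite Rabs_R0. lra.
  - apply H.
    + intros [|[|k]]; simpl; auto using sa_0.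
    + intros [|[|k]] [|[|l]] x Hkl; simpl; try tauto; intros; eauto.
Qed.

Lemma mu_C A : F A -> mu (fun x => ~ A x) = 1 - mu A.
Proof.
  intros HA. assert (E := mu_add A (fun x => ~ A x) HA (sa_C _ HA) (fun x a b => b a)). cbv beta in E.
  replace (fun x => A x \/ ~ A x) with (fun _ : T => True) in E
    by (apply set_ext; intros x; split; [intros _; apply classic| auto]).
  destruct Hm as [H1 _]. lra.
Qed.

Lemma mu_ge0 A : F A -> 0 <= mu A. Proof. apply Hm. Qed.

Lemma mu_mono A B : F A -> F B -> (forall x, A x -> B x) -> mu A <= mu B.
Proof.
  intros HA HB Hs.
  assert (E := mu_add A (fun x => B x /\ ~ A x) HA (sa_I _ _ HB (sa_C _ HA)) (fun x a b => proj2 b a)). cbv beta in E.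
  replace (fun x => A x \/ (B x /\ ~ A x)) with B in E.
  2:{ apply set_ext; intros x; split.
      - intros Hb. destruct (classic (A x)); tauto.
      - intros [a|[b _]]; auto. }
  assert (0 <= mu (fun x => B x /\ ~ A x)) by (apply mu_ge0, sa_I; auto using sa_C). lra.
Qed.

Lemma mu_inter A B : F A -> F B -> mu A + mu B - 1 <= mu (fun x => A x /\ B x).
Proof.
  intros HA HB.
  assert (E := mu_C (fun x => ~ A x \/ ~ B x) (sa_U _ _ (sa_C _ HA) (sa_C _ HB))). cbv beta in E.
  replace (fun x => ~ (~ A x \/ ~ B x)) with (fun x => A x /\ B x) in E
    by (apply set_ext; intros x; destruct (classic (A x)); destruct (classic (B x)); tauto).
  rewrite E.
  assert (E2 := mu_add (fun x => ~ A x) (fun x => A x /\ ~ B x) (sa_C _ HA) (sa_I _ _ HA (sa_C _ HB)) (fun x a b => a (proj1 b))). cbv beta in E2.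
  replace (fun x => ~ A x \/ (A x /\ ~ B x)) with (fun x => ~ A x \/ ~ B x) in E2
    by (apply set_ext; intros x; destruct (classic (A x)); tauto).
  rewrite E2, (mu_C A HA).
  assert (mu (fun x => A x /\ ~ B x) <= mu (fun x => ~ B x))
    by (apply mu_mono; [apply sa_I; auto using sa_C| apply sa_C; auto| tauto]).
  rewrite (mu_C B HB) in H. lra.
Qed.

Lemma sa_all (A : nat -> T -> Prop) : (forall k, F (A k)) -> F (fun x => forall k, A k x).
Proof.
  intros HA.
  replace (fun x => forall k, A k x) with (fun x => ~ exists k, ~ A k x).
  - apply sa_C. apply HF. intros k; apply sa_C, HA.
  - apply set_ext; intros x; split.
    + intros H k. destruct (classic (A k x)); auto. exfalso; eauto.
    + intros H [k Hk]; auto.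
Qed.
End M.

Lemma rprod_ext N f g : (forall k, (k < N)%nat -> f k = g k) -> rprod N f = rprod N g.
Proof.
  induction N; simpl; intros H; auto.
  rewrite IHN by (intros; apply H; lia). rewrite H by lia. auto.
Qed.

Definition inblk (lo L k : nat) : bool := (Nat.leb lo k && Nat.ltb k (lo + L))%bool.

Lemma inblk_spec lo L k : inblk lo L k = true <-> (lo <= k /\ k < lo + L)%nat.
Proof. unfold inblk. rewrite Bool.andb_true_iff, Nat.leb_le, Nat.ltb_lt. tauto. Qed.

Lemma rprod_block N lo L a :
  rprod N (fun k => if inblk lo L k then a else 1) = a ^ (Nat.min N (lo + L) - Nat.min N lo).
Proof.
  induction N; cbn [rprod].
  - reflexivity.
  - rewrite IHN. destruct (inblk lo L N) eqn:E.
    + apply inblk_spec in E.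
      replace (Nat.min (S N) (lo + L) - Nat.min (S N) lo)%nat
        with (S (Nat.min N (lo + L) - Nat.min N lo)) by lia.
      change (if true then a else 1) with a. rewrite <- tech_pow_Rmult. ring.
    + assert (~ (lo <= N /\ N < lo + L)%nat) by (rewrite <- inblk_spec; congruence).
      replace (Nat.min (S N) (lo + L) - Nat.min (S N) lo)%nat
        with (Nat.min N (lo + L) - Nat.min N lo)%nat by lia. ring.
Qed.

Lemma pow_bound (e b : R) (L : nat) : 0 < e < 1 -> 0 < b ->
  ln (/ b) / ln (/ (1 - e)) <= INR L -> (1 - e) ^ L <= b.
Proof.
  intros He Hb HL.
  rewrite <- Rpower_pow by lra. unfold Rpower.
  rewrite ln_Rinv in HL by lra. rewrite ln_Rinv in HL by lra.
  assert (Ha : ln (1 - e) < 0) by (rewrite <- ln_1; apply ln_increasing; lra).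
  assert (- ln b <= INR L * - ln (1 - e)).
  { replace (- ln b) with ((- ln b / - ln (1 - e)) * - ln (1 - e)) by (field; lra).
    apply Rmult_le_compat_r; lra. }
  rewrite <- (exp_ln b) by lra.
  destruct (Rle_lt_or_eq_dec (INR L * ln (1 - e)) (ln b)) as [h|h]; [lra| |].
  - left; apply exp_increasing; auto.
  - rewrite h; lra.
Qed.

Lemma scen {Omega : Type} (FO : (Omega -> Prop) -> Prop) (Pr : (Omega -> Prop) -> R)
  (FT : (vec -> Prop) -> Prop) (mu : (vec -> Prop) -> R) (X : nat -> Omega -> vec)
  (N lo L : nat) (S : vec -> Prop) (e b : R) :
  sigma_algebra FO -> prob_measure FO Pr -> sigma_algebra FT -> prob_measure FT mu ->
  iid_sample FO Pr FT mu X N -> FT S -> (lo + L <= N)%nat -> 0 < e < 1 -> 0 < b ->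
  ln (/ b) / ln (/ (1 - e)) <= INR L ->
  exists Ep : Omega -> Prop, FO Ep /\ 1 - b <= Pr Ep /\
    forall w, Ep w -> (forall j, (j < L)%nat -> S (X (lo + j)%nat w)) -> 1 - e <= mu S.
Proof.
  intros HFO HPr HFT Hmu [Hiid1 Hiid2] HS HN He Hb HL.
  destruct (classic (1 - e <= mu S)) as [Hc|Hc].
  { exists (fun _ => True). split; [apply sa_T; auto|]. split.
    - destruct HPr as [H1 _]. lra.
    - intros; exact Hc. }
  set (A := fun k => if inblk lo L k then S else (fun _ : vec => True)).
  assert (HA : forall k, (k < N)%nat -> FT (A k)).
  { intros k _. unfold A. destruct (inblk lo L k); [exact HS| apply sa_T; exact HFT]. }
  set (B := fun w => forall j, (j < L)%nat -> S (X (lo + j)%nat w)).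
  assert (EB : B = fun w => forall k, (k < N)%nat -> A k (X k w)).
  { apply set_ext; intros w; unfold B, A; split.
    - intros H k Hk. destruct (inblk lo L k) eqn:E; auto.
      apply inblk_spec in E. replace k with (lo + (k - lo))%nat by lia. apply H; lia.
    - intros H j Hj. specialize (H (lo + j)%nat ltac:(lia)).
      destruct (inblk lo L (lo + j)) eqn:E; auto.
      exfalso. assert (inblk lo L (lo + j) = true) by (apply inblk_spec; lia). congruence. }
  assert (FB : FO B).
  { rewrite EB.
    replace (fun w => forall k, (k < N)%nat -> A k (X k w))
      with (fun w => forall k, (fun k w => (k < N)%nat -> A k (X k w)) k w) by reflexivity.
    apply sa_all; auto. intros k.
    destruct (Compare_dec.lt_dec k N) as [h|h].
    - replace (fun w => (k < N)%nat -> A k (X k w)) with (fun w => A k (X k w))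
        by (apply set_ext; intros w; tauto).
      apply (proj1 (Hiid1 k h)). auto.
    - replace (fun w => (k < N)%nat -> A k (X k w)) with (fun _ : Omega => True)
        by (apply set_ext; intros w; split; [intros _ h'; lia| auto]).
      apply sa_T; auto. }
  assert (PB : Pr B = mu S ^ L).
  { rewrite EB, (Hiid2 A HA).
    rewrite (rprod_ext N _ (fun k => if inblk lo L k then mu S else 1)).
    - rewrite rprod_block. f_equal. lia.
    - intros k Hk. rewrite (proj2 (Hiid1 k Hk)) by auto. unfold A.
      destruct (inblk lo L k); auto. apply Hmu. }
  exists (fun w => ~ B w). split; [apply sa_C; auto|]. split.
  - rewrite (mu_C FO Pr HFO HPr B FB). rewrite PB.
    assert (mu S ^ L <= (1 - e) ^ L).
    { apply pow_incr. split; [apply mu_ge0 with FT; auto| lra]. }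
    assert ((1 - e) ^ L <= b) by (apply pow_bound; auto). lra.
  - intros w H1 H2. exfalso. apply H1. exact H2.
Qed.
Theorem theorem1
  (* parameter dimension, decision dimension, number of constraints *)
  (q n m : nat)
  (* parameter set, its sigma-algebra and the distribution P *)
  (Pset : vec -> Prop) (FT : (vec -> Prop) -> Prop) (mu : (vec -> Prop) -> R)
  (* QP data *)
  (Q : vec -> mat) (c : vec -> vec) (H : vec -> mat) (h : vec -> vec)
  (* learned primal and dual policies *)
  (Ut lamt : vec -> vec)
  (* tolerances *)
  (eps beta gam eps_p eps_d beta_p beta_d gam_p gam_d : R)
  (Np Nd : nat)
  (* sample space and samples: X 0..Np-1 primal, X Np..Np+Nd-1 dual *)
  (Omega : Type) (FO : (Omega -> Prop) -> Prop) (Pr : (Omega -> Prop) -> R)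
  (X : nat -> Omega -> vec)
  (Hcomp : compact_Rq q Pset)
  (HFT : sigma_algebra FT) (Hmu : prob_measure FT mu)
  (HPsetF : FT Pset) (HPset1 : mu Pset = 1)
  (HQ : forall P, Pset P -> sym_pd n (Q P))
  (Hfeas : forall P, Pset P -> qp_feasible_finite n m (Q P) (c P) (H P) (h P))
  (Hmeas_p : FT (primal_ok n m Q c H h Ut gam_p))
  (Hmeas_d : FT (dual_ok n m Q c H h lamt gam_d))
  (Hmeas_t : FT (target_ok n m Q c H h Ut lamt gam))
  (Heps : 0 < eps < 1) (Hbeta : 0 < beta < 1) (Hgam : 0 < gam)
  (Heps_p : 0 < eps_p) (Heps_d : 0 < eps_d) (Heps_sum : eps_p + eps_d = eps)
  (Hbeta_p : 0 < beta_p) (Hbeta_d : 0 < beta_d) (Hbeta_sum : beta_p + beta_d = beta)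
  (Hgam_p : 0 < gam_p) (Hgam_d : 0 < gam_d) (Hgam_sum : gam_p + gam_d = gam)
  (HNp : ln (/ beta_p) / ln (/ (1 - eps_p)) <= INR Np)
  (HNd : ln (/ beta_d) / ln (/ (1 - eps_d)) <= INR Nd)
  (HFO : sigma_algebra FO) (HPr : prob_measure FO Pr)
  (Hiid : iid_sample FO Pr FT mu X (Np + Nd)) :
  exists E : Omega -> Prop, FO E /\ 1 - beta <= Pr E /\
    forall w, E w ->
      ((forall i, (i < Np)%nat -> primal_ok n m Q c H h Ut gam_p (X i w)) /\
       (forall j, (j < Nd)%nat -> dual_ok n m Q c H h lamt gam_d (X (Np + j)%nat w))) ->
      1 - eps <= mu (target_ok n m Q c H h Ut lamt gam).
Proof.
  destruct (scen FO Pr FT mu X (Np + Nd) 0 Np _ eps_p beta_p HFO HPr HFT Hmu Hiid Hmeas_p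
    ltac:(lia) ltac:(lra) Hbeta_p HNp) as [Ep [FEp [PEp Hp]]].
  destruct (scen FO Pr FT mu X (Np + Nd) Np Nd _ eps_d beta_d HFO HPr HFT Hmu Hiid Hmeas_d
    ltac:(lia) ltac:(lra) Hbeta_d HNd) as [Ed [FEd [PEd Hd]]].
  exists (fun w => Ep w /\ Ed w). split; [apply sa_I; auto|]. split.
  - assert (HI := mu_inter FO Pr HFO HPr Ep Ed FEp FEd). lra.
  - intros w [E1 E2] [H1 H2].
    assert (Mp := Hp w E1 H1). assert (Md := Hd w E2 H2).
    assert (I := mu_inter FT mu HFT Hmu _ _ Hmeas_p Hmeas_d).
    assert (mu (fun x => primal_ok n m Q c H h Ut gam_p x /\ dual_ok n m Q c H h lamt gam_d x)
            <= mu (target_ok n m Q c H h Ut lamt gam)).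
    { apply (mu_mono FT mu HFT Hmu); [apply sa_I; auto | auto |].
      intros x [[a1 a2] [b1 b2]]. unfold target_ok. split; [|split]; auto. lra. }
    lra.
Qed.
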